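(* Let $A=K[X_1,\ldots,X_n]$ be a polynomial ring over a field $K$, let $I\subseteq A$ be a homogeneous ideal, let $\prec$ be a monomial order on $A$, and let $G$ be the reduced Gr\''obner basis of $I$ with respect to $\prec$. Then $\operatorname{supp}(G)\subseteq \operatorname{cs}(I)$; that is, for every $f\in G$, the set $\operatorname{supp}(f)$ is a minimal element (with respect to inclusion) of $\{\operatorname{supp}(h) : h\in I,\ h\neq 0\}$.
   Context: For a nonzero polynomial $f\in A$, $\operatorname{supp}(f)$ denotes the set of monomials appearing in $f$ with nonzero coefficient. For a subset $S\subseteq A$, $\operatorname{supp}(S)$ is the set $\{\operatorname{supp}(f): f\in S,\ f\neq 0\}$. The circuits set $\operatorname{cs}(S)$ of a subset $S\subseteq A$ is the set of all minimal (with respect to inclusion) elements of $\operatorname{supp}(S)$. The reduced Gr\''obner basis of $I$ with respect to $\prec$ is the unique Gr\''obner basis $\{f_1,\dots,f_r\}$ of $I$ whose elements are monic with respect to $\prec$ and such that the leading monomial of $f_i$ divides no monomial of $\operatorname{supp}(f_j)$ for $i\neq j$. *)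

(* Defs.v *)
From HB Require Import structures.
From mathcomp Require Import all_boot all_order all_algebra.
From mathcomp Require Import multinomials.mpoly.

Set Implicit Arguments.
Unset Strict Implicit.
Unset Printing Implicit Defensive.

Import GRing.Theory.
Local Open Scope ring_scope.

Section Groebner.
Variables (K : fieldType) (n : nat).

(* A monomial order: a total order on monomials, compatible with
   multiplication (addition of exponent vectors), with 1 as least element
   (hence a well-order by Dickson's lemma). *)
Definition monomial_order (le : rel 'X_{1..n}) : Prop :=
  [/\ reflexive le, antisymmetric le, transitive le /\ total le,
      (forall m1 m2 m : 'X_{1..n}, le m1 m2 -> le (m1 + m)%MM (m2 + m)%MM)
    & (forall m : 'X_{1..n}, le 0%MM m)].

Definition is_ideal (I : {mpoly K[n]} -> Prop) : Prop :=
  [/\ I 0,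
      (forall f g, I f -> I g -> I (f + g))
    & (forall a f, I f -> I (a * f))].

Definition hcomp (d : nat) (f : {mpoly K[n]}) : {mpoly K[n]} :=
  \sum_(m <- msupp f | mdeg m == d) f@_m *: 'X_[m].

(* Homogeneous ideal: an ideal containing all homogeneous components
   of each of its elements (equivalently, generated by homogeneous elements). *)
Definition homogeneous_ideal (I : {mpoly K[n]} -> Prop) : Prop :=
  is_ideal I /\ forall f d, I f -> I (hcomp d f).

Definition is_lm (le : rel 'X_{1..n}) (f : {mpoly K[n]}) (m : 'X_{1..n}) : Prop :=
  m \in msupp f /\ forall m', m' \in msupp f -> le m' m.

Definition mdivides (m1 m2 : 'X_{1..n}) : bool := (m1 <= m2)%MM.

Definition groebner_basis (le : rel 'X_{1..n}) (I : {mpoly K[n]} -> Prop)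
    (G : seq {mpoly K[n]}) : Prop :=
  (forall g, g \in G -> I g /\ g != 0) /\
  (forall f, I f -> f != 0 ->
     exists g m mg, [/\ g \in G, is_lm le f m, is_lm le g mg & mdivides mg m]).

Definition reduced_groebner_basis (le : rel 'X_{1..n}) (I : {mpoly K[n]} -> Prop)
    (G : seq {mpoly K[n]}) : Prop :=
  [/\ groebner_basis le I G,
      (forall g m, g \in G -> is_lm le g m -> g@_m = 1)
    & (forall g1 g2 m1, g1 \in G -> g2 \in G -> g1 != g2 -> is_lm le g1 m1 ->
         forall m, m \in msupp g2 -> ~~ mdivides m1 m)].

(* supp(S) = { supp f : f in S, f <> 0 }, supports viewed as finite sets
   of monomials (compared extensionally). *)
Definition in_supp_set (S : {mpoly K[n]} -> Prop) (s : seq 'X_{1..n}) : Prop :=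
  exists f, [/\ S f, f != 0 & s =i msupp f].

Definition in_cs (S : {mpoly K[n]} -> Prop) (s : seq 'X_{1..n}) : Prop :=
  in_supp_set S s /\
  forall t, in_supp_set S t -> {subset t <= s} -> {subset s <= t}.

End Groebner.

(* Main.v *)
Require Import Defs.
From HB Require Import structures.
From mathcomp Require Import all_boot all_order all_algebra.
From mathcomp Require Import multinomials.mpoly.

Import GRing.Theory.
Local Open Scope ring_scope.

Lemma div_le (n : nat) (le : rel 'X_{1..n}) (a b : 'X_{1..n}) :
  monomial_order le -> mdivides a b -> le a b.
Proof.
move=> [_ _ _ hmul h0] dv.
have := hmul 0%MM (b - a)%MM a (h0 (b - a)%MM).
by rewrite add0m submK.
Qed.

Theorem lemma2p2 (K : fieldType) (n : nat) (I : {mpoly K[n]} -> Prop)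
    (le : rel 'X_{1..n}) (G : seq {mpoly K[n]}) :
  homogeneous_ideal I -> monomial_order le -> reduced_groebner_basis le I G ->
  forall f, f \in G -> in_cs I (msupp f).
Proof.
move=> [[I0 IadD Imul] _] mo [[GI Glm] Gmon Gred] f fG.
have [If fn0] := GI f fG.
have antis : antisymmetric le by case: mo.
split; first by exists f.
move=> t [h [Ih hn0 th]] sub.
have subh : forall x, x \in msupp h -> x \in msupp f.
  by move=> x; rewrite -th; apply: sub.
have isf : forall g m mg, g \in G -> is_lm le g mg -> mdivides mg m ->
    m \in msupp f -> g = f.
  move=> g m mg gG lmg dvd mf; apply/eqP/negPn/negP => ne.
  by have := Gred g f mg gG fG ne lmg m mf; rewrite dvd.
have [g [m [mg [gG [mh mhmax] lmg dvd]]]] := Glm h Ih hn0.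
have gf := isf g m mg gG lmg dvd (subh m mh); subst g.
have emm : m = mg.
  apply: antis; apply/andP; split; first exact: (proj2 lmg) (subh m mh).
  exact: div_le.
subst m.
set c := (h@_mg)^-1.
set r := f + (-c)%:MP * h.
have Ir : I r := IadD _ _ If (Imul _ _ Ih).
have rc : forall x, r@_x = f@_x - c * h@_x.
  by move=> x; rewrite mcoeffD mcoeffCM mulNr.
have hm0 : h@_mg != 0 by rewrite -mcoeff_msupp.
have r0 : r = 0.
  apply/eqP/negPn/negP => rn0.
  have [g [m [mr [gG2 [mrs mrmax] lmg' dvd']]]] := Glm r Ir rn0.
  have msf : m \in msupp f.
    apply/negPn/negP => mnf; move: mrs; rewrite mcoeff_msupp rc.
    move: (mnf); rewrite -mcoeff_eq0 => /eqP ->.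
    have : h@_m == 0.
      by rewrite mcoeff_eq0; apply/negP => /subh; rewrite (negbTE mnf).
    by move/eqP->; rewrite mulr0 subr0 eqxx.
  have gf := isf g m mr gG2 lmg' dvd' msf; subst g.
  have e1 : m = mr.
    apply: antis; apply/andP; split; first exact: (proj2 lmg') msf.
    exact: div_le.
  have e2 : mr = mg.
    apply: antis; apply/andP; split.
      exact: (proj2 lmg) (proj1 lmg').
    exact: (proj2 lmg') (proj1 lmg).
  subst m mr.
  move: mrs; rewrite mcoeff_msupp rc (Gmon f mg fG lmg) /c mulVf //.
  by rewrite subrr eqxx.
move=> x xf; rewrite th.
have := rc x; rewrite r0 mcoeff0 => /eqP; rewrite eq_sym subr_eq0 => /eqP fx.
move: xf; rewrite !mcoeff_msupp fx.
by apply: contra => /eqP ->; rewrite mulr0.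
Qed.
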